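(* Let $n\ge 2$, let $P_n$ be the path with vertices $x_1,\dots,x_n$ and edges $\{x_i,x_{i+1}\}$, let $\mathcal C$ be a maximal independent set of $P_n$ with $c:=|\mathcal C|$, and let $G$ be the $\mathcal C$-suspension of $P_n$. Let $\alpha:=\lceil n/2\rceil$, $\delta_0=0$ if $x_1\in\mathcal C$ and $1$ otherwise, $\delta_t=0$ if $x_n\in\mathcal C$ and $1$ otherwise, and $\delta:=\delta_0+\delta_t$. Then $G$ is pseudo-Gorenstein$^{*}$ if and only if one of the following holds: (a) $n\equiv 0,2,9,11\pmod{12}$ and $c+\delta\le\alpha$; (b) $n\equiv 3,5,6,8\pmod{12}$ and $c+\delta=\alpha+1$; (c) $n\equiv 1,4\pmod{12}$ and $\mathcal C=\{x_1,x_4,\dots,x_n\}$.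
   Context: For $\varnothing\ne C\subseteq V(G)$, the $C$-suspension of $G$ is obtained by adding a new vertex $z$ adjacent exactly to the vertices of $C$. For a finite simple graph $G$ on vertex set $[N]$, let $S=K[y_1,\dots,y_N]$ ($K$ a field) and $I(G)$ the edge ideal generated by $y_iy_j$, $\{i,j\}\in E(G)$. Let $\alpha(G)$ be the independence number (equal to $\dim S/I(G)$). Write the Hilbert series of $S/I(G)$ uniquely as $(h_0+\dots+h_st^s)/(1-t)^{\alpha(G)}$ with $h_s\ne 0$, and $\mathfrak a(G)=s-\alpha(G)$. $G$ is pseudo-Gorenstein$^{*}$ if $h_s=1$ and $\mathfrak a(G)=0$. *)

(* Defs.v *)
From mathcomp Require Import all_boot all_order all_algebra.
Set Implicit Arguments. Unset Strict Implicit. Unset Printing Implicit Defensive.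
Import GRing.Theory Num.Theory.

(* A finite simple graph is given by a vertex finType V and an (intended
   symmetric, irreflexive) edge relation e : rel V. *)

Definition independent (V : finType) (e : rel V) (A : {set V}) : bool :=
  [forall x in A, forall y in A, ~~ e x y].

Definition maximal_independent (V : finType) (e : rel V) (A : {set V}) : Prop :=
  independent e A /\ forall B : {set V}, independent e B -> A \subset B -> B = A.

Definition indep_number (V : finType) (e : rel V) : nat :=
  \max_(A : {set V} | independent e A) #|A|.

(* Path P_n on vertices 'I_n (vertex i stands for x_{i+1}). *)
Definition path_rel (n : nat) : rel 'I_n :=
  fun i j => (i.+1 == j :> nat) || (j.+1 == i :> nat).

(* C-suspension: new vertex z = None adjacent exactly to the vertices of C. *)
Definition suspension (V : finType) (e : rel V) (C : {set V}) : rel (option V) :=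
  fun u v => match u, v with
             | Some x, Some y => e x y
             | None, Some y => y \in C
             | Some x, None => x \in C
             | None, None => false
             end.

(* Hilbert function of S/I(G) in degree d: the dimension over K of the degree-d
   part, i.e. the number of degree-d monomials prod_v y_v^(m v) not in I(G),
   i.e. whose support is independent (standard monomials of a monomial ideal
   form a K-basis of the quotient). Exponents are bounded by d, hence the
   finite type 'I_d.+1. *)
Definition hilbert_fun (V : finType) (e : rel V) (d : nat) : nat :=
  #|[set m : {ffun V -> 'I_d.+1} |
      (\sum_(v : V) (m v : nat) == d)%N &&
      independent e [set v | (0 < m v)%N]]|.

(* Coefficients of the numerator h(t) = (1-t)^alpha(G) * HS(t) of the Hilbert
   series HS(t) = sum_d hilbert_fun d t^d written over (1-t)^alpha(G). *)
Definition h_coef (V : finType) (e : rel V) (d : nat) : int :=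
  (\sum_(k < d.+1)
     (-1) ^+ k * ('C(indep_number e, k))%:Z * (hilbert_fun e (d - k))%:Z)%R.

(* pseudo-Gorenstein*: h_s = 1 and a(G) = s - alpha(G) = 0, where s is the
   degree of the h-polynomial; i.e. h_alpha = 1 and h_d = 0 for d > alpha. *)
Definition pseudo_gorenstein_star (V : finType) (e : rel V) : Prop :=
  h_coef e (indep_number e) = 1%R /\
  forall d : nat, (indep_number e < d)%N -> h_coef e d = 0%R.

(* Main.v *)
Require Import Defs.
From mathcomp Require Import all_boot all_order all_algebra.
From mathcomp Require Import zify ring.
From Stdlib Require Import FunctionalExtensionality.

Module PA.
Set Implicit Arguments. Unset Strict Implicit. Unset Printing Implicit Defensive.
Import GRing.Theory Num.Theory.
Local Open Scope ring_scope.

Definition Dl (F : nat -> int) : nat -> int :=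
  fun d => F d - (if d is d'.+1 then F d' else 0).
Definition Sh (F : nat -> int) : nat -> int :=
  fun d => if d is d'.+1 then F d' else 0.
Definition Dop (a : nat) (F : nat -> int) (d : nat) : int :=
  \sum_(k < d.+1) (-1) ^+ k * ('C(a, k))%:Z * F (d - k)%N.

Lemma Dop0 F : Dop 0 F = F.
Proof.
apply: functional_extensionality => d; rewrite /Dop big_ord_recl /= big1 ?addr0.
  by rewrite expr0 mul1r mul1r subn0.
by move=> i _; rewrite bin0n /= mulr0 mul0r.
Qed.

Lemma DopS a F : Dop a.+1 F = Dl (Dop a F).
Proof.
apply: functional_extensionality => d; rewrite /Dop /Dl.
case: d => [|d].
  by rewrite !big_ord_recl !big_ord0 /= !bin0 ?addr0 ?subr0.
rewrite [in RHS]big_ord_recl [in LHS]big_ord_recl /= !bin0 !expr0 !subn0.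
under eq_bigr => i _ do rewrite binS PoszD mulrDr mulrDl.
rewrite big_split /= addrA; congr (_ + _).
rewrite -sumrN; apply: eq_bigr => i _.
by rewrite exprS subSS !mulN1r !mulNr.
Qed.

Lemma Dop_iter a F : Dop a F = iter a Dl F.
Proof. by elim: a => [|a IH]; rewrite ?Dop0 // DopS IH. Qed.

Fixpoint Nc (a : nat) : nat -> nat :=
  match a with
  | 0 => fun m => (m == 0%N) : nat
  | a'.+1 => fun m => (\sum_(j < m) Nc a' (m - j.+1))%N
  end.
Definition NcZ a : nat -> int := fun m => (Nc a m)%:Z.

Lemma Dl_Nc a : Dl (NcZ a.+1) = Sh (NcZ a).
Proof.
apply: functional_extensionality => d; rewrite /Dl /Sh /NcZ.
case: d => [|d] /=; first by rewrite big_ord0 subr0.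
rewrite big_ord_recl /= subn1 /= PoszD addrK.
done.
Qed.

Lemma Dl_Sh F : Dl (Sh F) = Sh (Dl F).
Proof.
apply: functional_extensionality => d; rewrite /Dl /Sh.
by case: d => [|[|d]] //=; rewrite subr0.
Qed.

Lemma iterDl_Sh j F : iter j Dl (Sh F) = Sh (iter j Dl F).
Proof. by elim: j => [|j IH] //=; rewrite IH Dl_Sh. Qed.

Definition delta (a : nat) : nat -> int := fun d => if d == a then 1 else 0.

Lemma iterDl_Nc a : iter a Dl (NcZ a) = delta a.
Proof.
elim: a => [|a IH].
  by apply: functional_extensionality => d; rewrite /NcZ /delta /=; case: (d == 0%N).
rewrite iterSr Dl_Nc iterDl_Sh IH.
by apply: functional_extensionality => d; rewrite /Sh /delta; case: d.
Qed.

Definition Tv (j a d : nat) : int :=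
  if (a <= d)%N then (-1) ^+ (d - a) * ('C(j, d - a))%:Z else 0.

Lemma iterDl_delta j a : iter j Dl (delta a) = Tv j a.
Proof.
elim: j => [|j IH].
  apply: functional_extensionality => d; rewrite /delta /Tv /=.
  case: (ltngtP a d) => H.
  - have -> : (d - a)%N = (d - a).-1.+1 by lia.
    by rewrite bin0n mulr0.
  - by [].
  - by rewrite H subnn.
apply: functional_extensionality => d; rewrite iterS IH /Dl /Tv.
case: d => [|d].
  by rewrite subr0; case: a {IH} => [|a] //=; rewrite !bin0.
case: (ltngtP a d.+1) => H.
- have Had : (a <= d)%N by lia.
  rewrite Had.
  have -> : (d.+1 - a)%N = (d - a).+1 by lia.
  by rewrite binS PoszD exprS; ring.
- have H2 : (a <= d)%N = false by lia.
  by rewrite H2 subr0.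
- have H2 : (a <= d)%N = false by lia.
  by rewrite H2 H subnn subr0 !bin0.
Qed.

Lemma Dop_Nc al a : (a <= al)%N -> Dop al (NcZ a) = Tv (al - a) a.
Proof.
move=> H; rewrite Dop_iter -(subnK H) iterD iterDl_Nc iterDl_delta.
by rewrite subnK.
Qed.

End PA.
Import PA.

Module PB.
Set Implicit Arguments. Unset Strict Implicit. Unset Printing Implicit Defensive.

Section Count.
Variable V : finType.

Definition supp N (f : {ffun V -> 'I_N}) : {set V} := [set v | (0 < f v)%N].
Definition cntN N (A : {set V}) m :=
  #|[set f : {ffun V -> 'I_N} | (\sum_v (f v : nat) == m) && (supp f == A)]|.

Lemma le_val_sum N (f : {ffun V -> 'I_N}) v : (f v <= \sum_u (f u : nat))%N.
Proof. by rewrite (bigD1 v) //= leq_addr. Qed.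

Lemma cnt_bound N A m : (m < N)%N -> cntN N A m = cntN m.+1 A m.
Proof.
move=> H.
pose phi (g : {ffun V -> 'I_m.+1}) : {ffun V -> 'I_N} := [ffun v => widen_ord H (g v)].
have phi_inj : injective phi.
  move=> g1 g2 E; apply/ffunP => v; apply: val_inj.
  by move/ffunP: E => /(_ v); rewrite !ffunE => /(congr1 val).
rewrite /cntN -(card_imset _ phi_inj); apply: eq_card => f.
apply/idP/imsetP.
- rewrite inE => /andP[/eqP Hs /eqP Hsupp].
  have Hle v : (f v < m.+1)%N by rewrite ltnS -Hs le_val_sum.
  exists [ffun v => Ordinal (Hle v)].
    rewrite inE; apply/andP; split.
      by apply/eqP; rewrite -[RHS]Hs; apply/eq_bigr => v _; rewrite ffunE.
    by rewrite -Hsupp; apply/eqP/setP => v; rewrite !inE ffunE.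
  by apply/ffunP => v; apply: val_inj; rewrite !ffunE.
- case=> g; rewrite !inE => /andP[/eqP Hs /eqP Hsupp] ->.
  apply/andP; split.
    by rewrite -Hs; apply/eqP/eq_bigr => v _; rewrite ffunE.
  by rewrite -Hsupp; apply/eqP/setP => v; rewrite !inE ffunE.
Qed.

Lemma cnt0 N m : (0 < N)%N -> cntN N set0 m = (m == 0%N).
Proof.
move=> HN; pose f0 : {ffun V -> 'I_N} := [ffun => Ordinal HN].
have E : [set f : {ffun V -> 'I_N} | (\sum_v (f v : nat) == m) && (supp f == set0)]
         = if m == 0%N then [set f0] else set0.
  apply/setP => f; rewrite !inE.
  have Hs : (supp f == set0) = (f == f0).
    apply/idP/eqP.
    - move/eqP/setP => Hs; apply/ffunP => v; apply: val_inj; rewrite ffunE /=.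
      by move: (Hs v); rewrite !inE; case: (nat_of_ord (f v)).
    - by move=> ->; apply/eqP/setP => v; rewrite !inE ffunE.
  rewrite Hs; case: (f =P f0) => [->|Hf]; last first.
    by rewrite andbF; case: (m == 0%N); rewrite ?inE //; apply/esym/eqP.
  have -> : (\sum_v (f0 v : nat))%N = 0%N by rewrite big1 // => v _; rewrite ffunE.
  case: (m =P 0%N) => [->|Hm]; rewrite ?inE ?eqxx // andbT; apply/negP => /eqP H; apply: Hm; by rewrite H.
rewrite /cntN E; case: (m == 0%N); by rewrite ?cards1 ?cards0.
Qed.

Lemma cntS N (B : {set V}) (x : V) m : (m < N)%N -> x \notin B ->
  cntN N (x |: B) m = (\sum_(j < m) cntN N B (m - j.+1))%N.
Proof.
move=> HmN HxB.
have HN : (0 < N)%N by lia.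
set S := [set f : {ffun V -> 'I_N} | (\sum_v (f v : nat) == m) && (supp f == x |: B)].
have part : #|S| = (\sum_(j : 'I_N) #|[set f in S | f x == j]|)%N.
  rewrite -sum1_card (partition_big (fun f : {ffun V -> 'I_N} => f x) predT) //=.
  by apply: eq_bigr => j _; rewrite -sum1_card; apply: eq_bigl => f; rewrite inE.
have perj (j : 'I_N) : #|[set f in S | f x == j]| =
    if (0 < j <= m)%N then cntN N B (m - j) else 0%N.
  case: ifP => Hj; last first.
    apply: eq_card0 => f; rewrite !inE; apply/negP => /andP[/andP[/eqP Hs /eqP Hsupp] /eqP Hfx].
    have : x \in supp f by rewrite Hsupp setU11.
    rewrite inE Hfx => H0; move: (le_val_sum f x); rewrite Hs Hfx; lia.
  pose upd (g : {ffun V -> 'I_N}) : {ffun V -> 'I_N} := [ffun v => if v == x then j else g v].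
  set T := [set g : {ffun V -> 'I_N} | (\sum_v (g v : nat) == m - j) && (supp g == B)].
  have gx0 g : g \in T -> nat_of_ord (g x) = 0%N.
    rewrite inE => /andP[_ /eqP Hsupp]; apply/eqP; rewrite -leqn0 leqNgt.
    by apply/negP => H; move: HxB; rewrite -Hsupp inE H.
  have sumD (g : {ffun V -> 'I_N}) : (\sum_v (g v : nat) = g x + \sum_(v | v != x) g v)%N.
    by rewrite (bigD1 x).
  have Hinj : {in T &, injective upd}.
    move=> g1 g2 H1 H2 E; apply/ffunP => v; case: (v =P x) => [->|Hv].
      by apply: ord_inj; rewrite (gx0 _ H1) (gx0 _ H2).
    by move/ffunP: E => /(_ v); rewrite !ffunE; move/eqP: Hv => /negbTE ->.
  rewrite /cntN -/T -(card_in_imset Hinj); apply: eq_card => f.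
  rewrite inE; apply/idP/imsetP.
  - rewrite inE => /andP[/andP[/eqP Hs /eqP Hsupp] /eqP Hfx].
    exists [ffun v => if v == x then Ordinal HN else f v].
      rewrite inE; apply/andP; split.
        rewrite sumD ffunE eqxx /= add0n; apply/eqP.
        rewrite -Hs sumD Hfx addKn; apply: eq_bigr => v /negbTE Hv; by rewrite ffunE Hv.
      apply/eqP/setP => v; rewrite !inE ffunE; case: eqP => [->|Hv].
        by rewrite /= (negbTE HxB).
      move/setP: Hsupp => /(_ v); rewrite !inE; case: eqP => //.
    apply/ffunP => v; rewrite !ffunE; case: eqP => [->|] //; by rewrite Hfx.
  - case=> g Hg ->; have Hg0 := gx0 _ Hg; move: Hg; rewrite inE => /andP[/eqP Hs /eqP Hsupp].
    rewrite inE ffunE eqxx eqxx andbT; apply/andP; split.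
      rewrite sumD ffunE eqxx; apply/eqP.
      have -> : (\sum_(v | v != x) (upd g v : nat) = \sum_(v | v != x) (g v : nat))%N.
        by apply: eq_bigr => v /negbTE Hv; rewrite ffunE Hv.
      move: Hs; rewrite sumD Hg0 add0n => ->; lia.
    apply/eqP/setP => v; rewrite !inE ffunE; case: eqP => [->|Hv] /=.
      by lia.
    by rewrite -Hsupp inE.
rewrite /cntN -/S part (eq_bigr _ (fun j _ => perj j)).
case: N HmN HN {S part perj} => [|N] HmN HN //.
rewrite big_ord_recl /= add0n.
rewrite (big_ord_widen_cond N (fun i => true) (fun j : nat => cntN N.+1 B (m - j.+1))) //.
rewrite [RHS]big_mkcond; apply: eq_bigr => i _ /=; rewrite /bump leq0n add1n.
by [].
Qed.

Lemma cnt_Nc N A m : (m < N)%N -> cntN N A m = Nc #|A| m.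
Proof.
move Ek : #|A| => k; elim: k A m Ek => [|k IH] A m Ek HmN.
  by move/eqP: Ek; rewrite cards_eq0 => /eqP ->; rewrite cnt0 //; lia.
have : (0 < #|A|)%N by rewrite Ek.
case/card_gt0P => x Hx.
have -> : A = x |: (A :\ x) by rewrite setD1K.
rewrite cntS //; last by rewrite !inE eqxx.
apply: eq_bigr => j _; apply: IH; last by lia.
by move: Ek; rewrite (cardsD1 x A) Hx add1n => [[]].
Qed.

Lemma hilbert_sum (e : rel V) m :
  hilbert_fun e m = (\sum_(A | independent e A) Nc #|A| m)%N.
Proof.
rewrite /hilbert_fun -sum1_card.
rewrite (partition_big (fun f : {ffun V -> 'I_m.+1} => supp f) (fun A => independent e A)) /=; last first.
  by move=> f; rewrite inE => /andP[].
apply: eq_bigr => A HA; rewrite -(@cnt_Nc m.+1) // /cntN -sum1_card.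
apply: eq_bigl => f; rewrite !inE.
case: (supp f =P A) => [E|NE]; last by rewrite !andbF.
by rewrite -E in HA; rewrite HA andbT.
Qed.

End Count.

End PB.
Import PB.

Module PC.
Set Implicit Arguments. Unset Strict Implicit. Unset Printing Implicit Defensive.
Import GRing.Theory Num.Theory.
Local Open Scope ring_scope.

Section HC.
Variables (V : finType) (e : rel V).

Lemma indep_le (A : {set V}) : independent e A -> (#|A| <= indep_number e)%N.
Proof. by move=> H; rewrite /indep_number (leq_bigmax_cond A H). Qed.

Lemma hcoef_sum d : h_coef e d =
  \sum_(A | independent e A) Tv (indep_number e - #|A|) #|A| d.
Proof.
rewrite /h_coef.
under eq_bigr => k _ do rewrite hilbert_sum (big_morph Posz PoszD (erefl _)) mulr_sumr.
rewrite exchange_big /=; apply: eq_bigr => A HA.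
by rewrite -Dop_Nc ?indep_le.
Qed.

Lemma hcoef_alpha : h_coef e (indep_number e) =
  \sum_(A | independent e A) (-1) ^+ (indep_number e - #|A|).
Proof.
rewrite hcoef_sum; apply: eq_bigr => A HA.
by rewrite /Tv indep_le // binn mulr1.
Qed.

Lemma hcoef_big d : (indep_number e < d)%N -> h_coef e d = 0.
Proof.
move=> Hd; rewrite hcoef_sum big1 // => A HA.
have H := indep_le HA.
rewrite /Tv; case: ifP => // _; rewrite bin_small ?mulr0 //; lia.
Qed.

Lemma pgs_iff : pseudo_gorenstein_star e <->
  \sum_(A | independent e A) (-1) ^+ (indep_number e - #|A|) = 1 :> int.
Proof.
rewrite /pseudo_gorenstein_star hcoef_alpha; split; first by case.
by move=> H; split => // d; apply: hcoef_big.
Qed.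
End HC.

End PC.
Import PC.

Module PD.
Set Implicit Arguments. Unset Strict Implicit. Unset Printing Implicit Defensive.

Section Susp.
Variables (V : finType) (e : rel V) (C : {set V}).

Lemma independentP (W : finType) (r : rel W) (A : {set W}) :
  reflect (forall x y, x \in A -> y \in A -> ~~ r x y) (independent r A).
Proof.
apply: (iffP forallP) => [H x y Hx Hy | H x].
  by move/implyP: (H x) => /(_ Hx) /forallP /(_ y) /implyP /(_ Hy).
by apply/implyP => Hx; apply/forallP => y; apply/implyP => Hy; apply: H.
Qed.

Lemma indep_Some (B : {set V}) :
  independent (suspension e C) (Some @: B) = independent e B.
Proof.
apply/independentP/independentP => H x y Hx Hy.
  exact: (H (Some x) (Some y) (imset_f _ Hx) (imset_f _ Hy)).
move: Hx Hy => /imsetP[x' Hx' ->] /imsetP[y' Hy' ->] /=; exact: H.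
Qed.

Lemma None_notin_img (B : {set V}) : None \notin Some @: B.
Proof. by apply/imsetP => [[x _]]. Qed.

Lemma indep_None (B : {set V}) :
  independent (suspension e C) (None |: Some @: B) = independent e B && (B \subset ~: C).
Proof.
apply/independentP/andP => [H | [/independentP H1 /subsetP H2] x y].
  split.
    apply/independentP => x y Hx Hy.
    by have := H (Some x) (Some y); rewrite !inE !imset_f ?orbT //; apply.
  apply/subsetP => x Hx; rewrite inE.
  by have := H None (Some x); rewrite !inE !imset_f ?orbT ?eqxx //; apply.
rewrite !inE => /orP[/eqP->|/imsetP[x' Hx' ->]] /orP[/eqP->|/imsetP[y' Hy' ->]] //=.
- by move: (H2 _ Hy'); rewrite inE.
- by move: (H2 _ Hx'); rewrite inE.
- exact: H1.
Qed.

Lemma preim_img (B : {set V}) : Some @^-1: (Some @: B) = B.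
Proof. by apply/setP => x; rewrite inE mem_imset //; exact: Some_inj. Qed.

Lemma preim_imgN (B : {set V}) : Some @^-1: (None |: Some @: B) = B.
Proof. by apply/setP => x; rewrite !inE mem_imset //; exact: Some_inj. Qed.

Variables (R : Type) (idx : R) (op : Monoid.com_law idx) (F : nat -> R).

Lemma susp_big :
  \big[op/idx]_(A : {set option V} | independent (suspension e C) A) F #|A| =
  op (\big[op/idx]_(B : {set V} | independent e B) F #|B|)
     (\big[op/idx]_(B : {set V} | independent e B && (B \subset ~: C)) F #|B|.+1).
Proof.
rewrite (bigID (fun A : {set option V} => None \in A)) /= Monoid.mulmC.
congr (op _ _).
- rewrite (reindex_onto (fun B : {set V} => Some @: B) (fun A : {set option V} => Some @^-1: A)) /=; last first.
    move=> A /andP[_ HA]; apply/setP => [[x|]]; last by rewrite (negbTE HA) (negbTE (None_notin_img _)).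
    by rewrite mem_imset ?inE //; exact: Some_inj.
  apply: eq_big => B.
    by rewrite indep_Some None_notin_img preim_img eqxx !andbT.
  by rewrite card_imset //; exact: Some_inj.
- rewrite (reindex_onto (fun B : {set V} => None |: Some @: B) (fun A : {set option V} => Some @^-1: A)) /=; last first.
    move=> A /andP[_ HA]; apply/setP => [[x|]]; last by rewrite HA setU11.
    by rewrite !inE mem_imset ?inE //; exact: Some_inj.
  apply: eq_big => B.
    by rewrite indep_None setU11 preim_imgN eqxx !andbT.
  by rewrite cardsU1 None_notin_img card_imset //; exact: Some_inj.
Qed.
End Susp.

Lemma susp_alpha (V : finType) (e : rel V) (C : {set V}) :
  indep_number (suspension e C) =
  maxn (indep_number e) (\max_(B : {set V} | independent e B && (B \subset ~: C)) #|B|.+1).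
Proof. by rewrite /indep_number (@susp_big V e C nat 0%N maxn (fun n => n)). Qed.

End PD.
Import PD.

Module PE.
Set Implicit Arguments. Unset Strict Implicit. Unset Printing Implicit Defensive.

Fixpoint ind (s : seq bool) : bool :=
  match s with
  | x :: ((y :: _) as t) => ~~ (x && y) && ind t
  | _ => true
  end.
Definition subb (b m : seq bool) := all2 (fun x y => x ==> y) b m.
Fixpoint allbs n : seq (seq bool) :=
  if n is n'.+1 then [seq false :: s | s <- allbs n'] ++ [seq true :: s | s <- allbs n']
  else [:: [::]].

Lemma ind_cons x t : ind (x :: t) = ~~ (x && head false t) && ind t.
Proof. by case: t => [|y t] //=; rewrite andbF. Qed.

Lemma indP s : reflect (forall i, ~~ (nth false s i && nth false s i.+1)) (ind s).
Proof.
elim: s => [|x t IH]; first by apply: ReflectT => i; rewrite nth_nil.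
rewrite ind_cons; apply: (iffP andP).
  case=> H1 /IH H2 [|i] /=; last exact: H2.
  by case: t {IH H2} H1 => [|y t] //=; rewrite andbF.
move=> H; split; first by have := H 0%N; case: t {IH H} => [|y t] //=; rewrite andbF.
by apply/IH => i; apply: (H i.+1).
Qed.

Lemma mem_cons_map (y : bool) L x b :
  (x :: b \in [seq y :: s | s <- L]) = (x == y) && (b \in L).
Proof.
apply/mapP/andP => [[s Hs [-> ->]]|[/eqP -> Hb]]; first by rewrite eqxx.
by exists b.
Qed.

Lemma mem_allbs n b : (b \in allbs n) = (size b == n).
Proof.
elim: n b => [|n IH] [|x b] //=.
  by rewrite mem_cat; apply/negP => /orP[] /mapP[? _].
by rewrite mem_cat !mem_cons_map IH eqSS; case: x; rewrite ?orbF.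
Qed.

Lemma allbs_uniq n : uniq (allbs n).
Proof.
elim: n => [|n IH] //=; rewrite cat_uniq !map_inj_uniq ?IH //=; try by move=> ? ? [].
rewrite andbT; apply/hasPn => b /mapP[s _ ->]; by rewrite /= mem_cons_map.
Qed.

Section Bridge.
Variable n : nat.
Implicit Types A B D : {set 'I_n}.

Definition tobs (A : {set 'I_n}) : seq bool := [seq i \in A | i <- enum 'I_n].

Lemma size_tobs A : size (tobs A) = n.
Proof. by rewrite size_map size_enum_ord. Qed.

Lemma nth_tobs A (i : 'I_n) : nth false (tobs A) i = (i \in A).
Proof. by rewrite (nth_map i) ?size_enum_ord // nth_ord_enum. Qed.

Lemma nth_tobs_ge A i : (n <= i)%N -> nth false (tobs A) i = false.
Proof. by move=> H; rewrite nth_default // size_tobs. Qed.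

Lemma card_tobs A : #|A| = count id (tobs A).
Proof. by rewrite /tobs enumT count_map cardE /enum_mem size_filter; apply: eq_count. Qed.

Lemma tobs_inj : injective tobs.
Proof.
move=> A B E; apply/setP => i; by rewrite -!nth_tobs E.
Qed.

Lemma subb_tobs A D : subb (tobs A) (tobs D) = (A \subset D).
Proof.
rewrite /subb /tobs; apply/idP/subsetP.
  move=> H i; have : i \in enum 'I_n by rewrite mem_enum.
  elim: (enum 'I_n) H => [|j s IH] //= /andP[H1 H2]; rewrite inE => /orP[/eqP->|].
    by move/implyP: H1.
  exact: IH.
move=> H; elim: (enum 'I_n) => [|j s IH] //=; rewrite IH andbT.
by apply/implyP; apply: H.
Qed.

Lemma ind_tobs A : ind (tobs A) = independent (@path_rel n) A.
Proof.
apply/indP/independentP => H.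
  move=> x y Hx Hy; apply/negP; rewrite /path_rel => /orP[] /eqP E.
    by have := H x; rewrite E !nth_tobs Hx Hy.
  by have := H y; rewrite E !nth_tobs Hx Hy.
move=> i; case: (ltnP i.+1 n) => Hi; last by rewrite (nth_tobs_ge _ Hi) andbF.
have Hi' : (i < n)%N by lia.
have := H (Ordinal Hi') (Ordinal Hi).
rewrite -(nth_tobs A (Ordinal Hi')) -(nth_tobs A (Ordinal Hi)) /= /path_rel /= eqxx /=.
by case: (nth false (tobs A) i) => //; case: (nth false (tobs A) i.+1) => // /(_ erefl erefl).
Qed.

Lemma tobs_surj b : size b = n -> tobs [set i : 'I_n | nth false b i] = b.
Proof.
move=> Hs; apply: (@eq_from_nth _ false); rewrite ?size_tobs //.
move=> i Hi; by rewrite (nth_tobs _ (Ordinal Hi)) inE.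
Qed.

Lemma big_sets_bs (R : Type) (idx : R) (op : Monoid.com_law idx)
  (P : pred (seq bool)) (F : seq bool -> R) :
  \big[op/idx]_(A : {set 'I_n} | P (tobs A)) F (tobs A) =
  \big[op/idx]_(b <- allbs n | P b) F b.
Proof.
rewrite -(big_map tobs P F).
apply: perm_big; apply: uniq_perm.
- by rewrite map_inj_uniq ?index_enum_uniq //; exact: tobs_inj.
- exact: allbs_uniq.
move=> b; rewrite mem_allbs; apply/mapP/eqP => [[A _ ->]|Hs].
  exact: size_tobs.
by exists [set i : 'I_n | nth false b i]; rewrite ?mem_index_enum // tobs_surj.
Qed.
End Bridge.

End PE.
Import PE.

Module PF.
Set Implicit Arguments. Unset Strict Implicit. Unset Printing Implicit Defensive.
Import GRing.Theory Num.Theory.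

Section Gen.
Variables (R : Type) (idx : R) (op : Monoid.com_law idx).

Definition Gb (m : seq bool) (g : nat -> R) : R :=
  \big[op/idx]_(b <- allbs (size m) | ind b && subb b m) g (count id b).

Lemma ind_false s : ind (false :: s) = ind s.
Proof. by rewrite ind_cons. Qed.

Lemma G_nil g : Gb [::] g = g 0%N.
Proof. by rewrite /Gb /= big_cons big_nil /= Monoid.mulm1. Qed.

Lemma G_false m g : Gb (false :: m) g = Gb m g.
Proof.
rewrite /Gb /= big_cat !big_map /=.
rewrite [X in op _ X]big1_seq ?Monoid.mulm1; last by move=> s; rewrite andbF.
by apply: eq_big => [[|x s] //|s _]; rewrite add0n.
Qed.

Lemma G_true m g : Gb (true :: m) g = op (Gb m g) (Gb (behead m) (fun k => g k.+1)).
Proof.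
rewrite /Gb /= big_cat !big_map /=.
congr (op _ _); first by apply: eq_big => [[|x s] //|s _]; rewrite add0n.
case: m => [|y m] /=.
  by rewrite !big_cons !big_nil.
rewrite big_cat !big_map /=.
rewrite big_pred0_eq Monoid.mulm1.
by apply: eq_big => [[|x s] //|s _]; rewrite add0n add1n.
Qed.
End Gen.

Local Open Scope ring_scope.

Definition Ip (m : seq bool) : int := @Gb int 0 +%R m (fun k => (-1) ^+ k).
Definition am (m : seq bool) : nat := @Gb nat 0%N maxn m id.

Lemma Ip_nil : Ip [::] = 1.
Proof. by rewrite /Ip G_nil. Qed.
Lemma Ip_false m : Ip (false :: m) = Ip m.
Proof. by rewrite /Ip G_false. Qed.
Lemma Ip_true m : Ip (true :: m) = Ip m - Ip (behead m).
Proof.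
rewrite /Ip G_true; congr (_ + _); rewrite /Gb -sumrN.
by apply: eq_bigr => b _; rewrite exprS mulN1r.
Qed.

Lemma big_max_succ (r : seq (seq bool)) (P : pred (seq bool)) (f : seq bool -> nat) :
  has P r -> (\max_(x <- r | P x) (f x).+1 = (\max_(x <- r | P x) f x).+1)%N.
Proof.
elim: r => [|x r IH] //= H; rewrite !big_cons.
case: (boolP (has P r)) => Hr.
  by rewrite IH //; case: (P x) => //; rewrite -maxnSS.
have E : forall h : seq bool -> nat, (\max_(y <- r | P y) h y = 0)%N.
  move=> h; rewrite big_seq_cond big1 // => y /andP[Hy Py].
  by move/hasPn: Hr => /(_ y Hy); rewrite Py.
by move: H; rewrite (negbTE Hr) orbF => ->; rewrite !E !maxn0.
Qed.

Lemma has_allbs m : has (fun b => ind b && subb b m) (allbs (size m)).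
Proof.
apply/hasP; exists (nseq (size m) false).
  by rewrite mem_allbs size_nseq.
apply/andP; split.
  by apply/indP => i; rewrite nth_nseq; case: ifP.
by rewrite /subb; elim: m => //= x m ->.
Qed.

Lemma am_nil : am [::] = 0%N.
Proof. by rewrite /am G_nil. Qed.
Lemma am_false m : am (false :: m) = am m.
Proof. by rewrite /am G_false. Qed.
Lemma am_true m : am (true :: m) = maxn (am m) (am (behead m)).+1.
Proof. by rewrite /am G_true /Gb big_max_succ // has_allbs. Qed.

Lemma Ip_cat m1 m2 : Ip (m1 ++ false :: m2) = Ip m1 * Ip m2.
Proof.
move: {2}(size m1) (leqnn (size m1)) => k; elim: k m1 => [|k IH] m1.
  by case: m1 => // _; rewrite /= Ip_false Ip_nil mul1r.
case: m1 => [|[] m1] Hs.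
- by rewrite /= Ip_false Ip_nil mul1r.
- rewrite /= !Ip_true IH //; case: m1 Hs => [|y m1] Hs /=.
    by rewrite !Ip_nil mul1r subrr mul0r.
  by rewrite IH ?mulrBl //= ; simpl in Hs; lia.
- by rewrite cat_cons !Ip_false IH.
Qed.

Lemma am_cat m1 m2 : am (m1 ++ false :: m2) = (am m1 + am m2)%N.
Proof.
move: {2}(size m1) (leqnn (size m1)) => k; elim: k m1 => [|k IH] m1.
  by case: m1 => // _; rewrite /= am_false am_nil.
case: m1 => [|[] m1] Hs.
- by rewrite /= am_false am_nil.
- rewrite /= !am_true IH //; case: m1 Hs => [|y m1] Hs /=.
    by rewrite !am_nil /=; lia.
  rewrite IH; last by simpl in Hs; lia.
  lia.
- by rewrite cat_cons !am_false IH.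
Qed.

End PF.
Import PF.

Module PG.
Set Implicit Arguments. Unset Strict Implicit. Unset Printing Implicit Defensive.
Import GRing.Theory Num.Theory.

Fixpoint gt (r : seq bool) : bool :=
  match r with
  | [::] => true
  | [:: false] => true
  | false :: true :: r' => gt r'
  | false :: false :: true :: r' => gt r'
  | _ => false
  end.

Lemma gt_ind (P : seq bool -> Prop) :
  P [::] -> P [:: false] ->
  (forall r, gt r -> P r -> P (false :: true :: r)) ->
  (forall r, gt r -> P r -> P (false :: false :: true :: r)) ->
  forall r, gt r -> P r.
Proof.
move=> H0 H1 H2 H3 r.
move: {2}(size r) (leqnn (size r)) => k; elim: k r => [|k IH] r.
  by case: r.
case: r => [|[] r] //=; case: r => [|[] r] //=.
- by move=> Hs Hg; apply: H2 => //; apply: IH => //; lia.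
- case: r => [|[] r] //= Hs Hg; apply: H3 => //; apply: IH => //; lia.
Qed.

Definition patk k : seq bool := flatten (nseq k [:: false; false; true]).

Local Open Scope ring_scope.

Lemma am_gt r : gt r -> am (map negb r) = (count id r + ~~ last true r)%N.
Proof.
elim/gt_ind => {r} [|| r Hr IH | r Hr IH].
- by rewrite am_nil.
- by rewrite /= am_true !am_nil.
- rewrite /= -[true :: _]/([:: true] ++ false :: map negb r) am_cat IH /=.
  by rewrite am_true !am_nil.
- rewrite /= -[true :: _]/([:: true; true] ++ false :: map negb r) am_cat IH /=.
  by rewrite !am_true !am_nil.
Qed.

Lemma Ip_gt r : gt r -> Ip (map negb r) =
  if r == patk (size r %/ 3) then (-1) ^+ (size r %/ 3) else 0.
Proof.
elim/gt_ind => {r} [|| r Hr IH | r Hr IH].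
- by rewrite Ip_nil.
- by rewrite /= Ip_true !Ip_nil subrr.
- rewrite /= -[true :: _]/([:: true] ++ false :: map negb r) Ip_cat /=.
  rewrite Ip_true !Ip_nil subrr mul0r.
  by case: ((size r).+2 %/ 3)%N.
- rewrite /= -[true :: _]/([:: true; true] ++ false :: map negb r) Ip_cat IH /=.
  rewrite !Ip_true !Ip_nil subrr sub0r.
  have -> : ((size r).+3 %/ 3 = (size r %/ 3).+1)%N.
    by lia.
  rewrite /patk /= -/(patk _) !eqseq_cons /= exprS.
  by case: (r == _); rewrite ?mulr0 // mulN1r mulNr mul1r.
Qed.

Lemma bound_gt r : gt r -> (2 * (count id r + ~~ last true r) <= size r + 1)%N.
Proof.
elim/gt_ind => {r} [|| r Hr IH | r Hr IH] //=.
- by move: IH; case: (last true r) => /=; lia.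
- by move: IH; case: (last true r) => /=; lia.
Qed.

Lemma last_patk k : last true (patk k) = true.
Proof. by elim: k => //= k; rewrite -/(patk k). Qed.

Lemma count_patk k : count id (patk k) = k.
Proof. by elim: k => //= k; rewrite -/(patk k) => ->. Qed.

Lemma size_patk k : size (patk k) = (3 * k)%N.
Proof. by elim: k => //= k; rewrite -/(patk k) => ->; lia. Qed.

Lemma ind_tl x s : ind (x :: s) -> ind s.
Proof. by rewrite ind_cons => /andP[]. Qed.

Definition domat (w : seq bool) i :=
  [|| nth false w i, (0 < i)%N && nth false w i.-1 | nth false w i.+1].

Lemma shape_aux r : ind (true :: r) ->
  (forall i, (i < size r)%N -> domat (true :: r) i.+1) -> gt r.
Proof.
move: {2}(size r) (leqnn (size r)) => k; elim: k r => [|k IH] r.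
  by case: r.
case: r => [//|[] r]; first by move=> _; rewrite ind_cons.
case: r => [//|[] r].
- move=> Hs Hi Hd; simpl in Hs; apply: (IH r); first by lia.
    by move: Hi => /ind_tl /ind_tl.
  move=> i Hir; have := Hd i.+2; rewrite /domat /=; apply; lia.
- case: r => [|[] r] Hs Hi Hd; simpl in Hs.
  + by have := Hd 1%N; rewrite /domat /=; apply.
  + apply: (IH r); first by lia.
      by move: Hi => /ind_tl /ind_tl /ind_tl.
    move=> i Hir; have := Hd i.+3; rewrite /domat /=; apply; lia.
  + by have := Hd 1%N; rewrite /domat /=; apply.
Qed.

Lemma shape w : ind w -> (forall i, (i < size w)%N -> domat w i) -> (0 < size w)%N ->
  (exists2 r, w = true :: r & gt r) \/ (exists2 r, w = false :: true :: r & gt r).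
Proof.
case: w => [|[] w] // Hi Hd _.
  left; exists w => //; apply: shape_aux => // i Hiw; apply: Hd => /=; lia.
case: w Hi Hd => [|[] w] Hi Hd.
- by have := Hd 0%N; rewrite /domat /=; move/(_ erefl).
- right; exists w => //; apply: shape_aux; first by move: Hi; rewrite ind_cons => /andP[].
  move=> i Hiw; have := Hd i.+2; rewrite /domat /=; apply; lia.
- by have := Hd 0%N; rewrite /domat /=; move/(_ erefl).
Qed.

Definition m3 n : seq bool := mkseq (fun i => i %% 3 == 0)%N n.

Lemma m3_patk k : m3 (3 * k + 1) = true :: patk k.
Proof.
rewrite /m3 /mkseq.
suff H : forall j, [seq (i %% 3 == 0)%N | i <- iota (3 * j) (3 * k + 1)] = true :: patk k.
  by rewrite -(H 0%N) muln0.
elim: k => [|k IH] j; first by rewrite muln0 /= modnMr.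
have -> : (3 * k.+1 + 1 = (3 * k + 1).+3)%N by lia.
have E0 : ((3 * j) %% 3 == 0)%N = true by apply/eqP; lia.
have E1 : ((3 * j).+1 %% 3 == 0)%N = false by apply/negbTE/eqP; lia.
have E2 : ((3 * j).+2 %% 3 == 0)%N = false by apply/negbTE/eqP; lia.
have E3 : ((3 * j).+3 = 3 * j.+1)%N by lia.
by rewrite /= -/(patk k) E0 E1 E2 E3 IH.
Qed.

End PG.
Import PG.

Module PH.
Set Implicit Arguments. Unset Strict Implicit. Unset Printing Implicit Defensive.
Import GRing.Theory Num.Theory.
Local Open Scope ring_scope.

Definition sv (n : nat) : int := nth 0 [:: 1; 0; -1; -1; 0; 1] (n %% 6).

Lemma sv_rec n : sv n.+2 = sv n.+1 - sv n.
Proof.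
rewrite /sv.
have : (n %% 6 < 6)%N by rewrite ltn_mod.
have E1 : (n.+1 %% 6 = (n %% 6).+1 %% 6)%N by lia.
have E2 : (n.+2 %% 6 = (n %% 6).+2 %% 6)%N by lia.
rewrite E1 E2; move: (n %% 6)%N => r.
by do 6 (case: r => [|r] //).
Qed.

Lemma Ip_nseq n : Ip (nseq n true) = sv n.
Proof.
suff : Ip (nseq n true) = sv n /\ Ip (nseq n.+1 true) = sv n.+1 by case.
elim: n => [|n [IH1 IH2]].
  by rewrite /= Ip_true !Ip_nil subrr.
by split => //; rewrite sv_rec -IH1 -IH2 [nseq _ _]/= Ip_true.
Qed.

Lemma am_nseq n : am (nseq n true) = uphalf n.
Proof.
suff : am (nseq n true) = uphalf n /\ am (nseq n.+1 true) = uphalf n.+1 by case.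
elim: n => [|n [IH1 IH2]].
  by rewrite /= am_true !am_nil.
split => //; rewrite [nseq _ _]/= am_true /= IH1 IH2; lia.
Qed.

Lemma sign_sub (a k : nat) : (k <= a)%N -> (-1) ^+ (a - k) = (-1) ^+ a * (-1) ^+ k :> int.
Proof.
move=> H; rewrite -{2}(subnK H) exprD -mulrA -exprD addnn -mul2n exprM sqrrN !expr1n.
by rewrite mulr1.
Qed.

Section Path.
Variable n : nat.

Lemma path_big (R : Type) (idx : R) (op : Monoid.com_law idx) (D : {set 'I_n}) (g : nat -> R) :
  \big[op/idx]_(B : {set 'I_n} | independent (@path_rel n) B && (B \subset D)) g #|B| =
  Gb op (tobs D) g.
Proof.
rewrite /Gb size_tobs -(@big_sets_bs n _ _ op (fun b => ind b && subb b (tobs D)) (fun b => g (count id b))).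
by apply: eq_big => B; rewrite ?ind_tobs ?subb_tobs ?card_tobs.
Qed.

Lemma path_big_all (R : Type) (idx : R) (op : Monoid.com_law idx) (g : nat -> R) :
  \big[op/idx]_(B : {set 'I_n} | independent (@path_rel n) B) g #|B| =
  Gb op (nseq n true) g.
Proof.
have -> : nseq n true = tobs [set: 'I_n].
  apply: (@eq_from_nth _ false); rewrite ?size_tobs ?size_nseq // => i Hi.
  by rewrite (nth_tobs _ (Ordinal Hi)) nth_nseq Hi inE.
rewrite -path_big; apply: eq_bigl => B; by rewrite subsetT andbT.
Qed.

Lemma tobsC (C : {set 'I_n}) : tobs (~: C) = map negb (tobs C).
Proof. by rewrite /tobs -map_comp; apply: eq_map => i /=; rewrite inE. Qed.

Lemma exists_nth (C : {set 'I_n}) k : [exists i in C, (i : nat) == k] = nth false (tobs C) k.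
Proof.
case: (ltnP k n) => Hk.
  rewrite (nth_tobs _ (Ordinal Hk)); apply/existsP/idP => [[i /andP[Hi /eqP Ei]]|H].
    by have -> : Ordinal Hk = i by apply: val_inj.
  by exists (Ordinal Hk); rewrite H eqxx.
rewrite nth_tobs_ge //; apply/existsP => [[i /andP[_ /eqP Ei]]].
by move: (ltn_ord i); rewrite Ei; lia.
Qed.

Lemma dom_tobs (C : {set 'I_n}) : maximal_independent (@path_rel n) C ->
  forall i, (i < size (tobs C))%N -> domat (tobs C) i.
Proof.
case=> HC Hmax i; rewrite size_tobs => Hi.
rewrite /domat (nth_tobs _ (Ordinal Hi)).
case: (boolP (Ordinal Hi \in C)) => // HiC /=.
have HB : ~~ independent (@path_rel n) (Ordinal Hi |: C).
  apply/negP => HB; have := Hmax _ HB (subsetUr _ _) => E.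
  by move: HiC; rewrite -E setU11.
move: HB; rewrite /independent => /forallPn[x]; rewrite negb_imply => /andP[Hx].
move=> /forallPn[y]; rewrite negb_imply negbK => /andP[Hy Hxy].
move: Hx Hy; rewrite !inE => /orP[/eqP Ex|Hx] /orP[/eqP Ey|Hy].
- by move: Hxy; rewrite Ex Ey /path_rel /=; lia.
- move: Hxy; rewrite Ex /path_rel /= => /orP[] /eqP Ey.
    by rewrite Ey (nth_tobs _ y) Hy orbT.
  have Hi0 : (0 < i)%N by lia.
  have -> : i.-1 = y by lia.
  by rewrite Hi0 /= (nth_tobs _ y) Hy.
- move: Hxy; rewrite Ey /path_rel /= => /orP[] /eqP Ex.
    have Hi0 : (0 < i)%N by lia.
    have -> : i.-1 = x by lia.
    by rewrite Hi0 /= (nth_tobs _ x) Hx.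
  by rewrite Ex (nth_tobs _ x) Hx orbT.
- by move/independentP: HC => /(_ x y Hx Hy); rewrite Hxy.
Qed.

Lemma tobs_m3 : tobs [set i : 'I_n | (i %% 3 == 0)%N] = m3 n.
Proof.
apply: (@eq_from_nth _ false); rewrite ?size_tobs ?size_mkseq // => i Hi.
by rewrite (nth_tobs _ (Ordinal Hi)) nth_mkseq // inE.
Qed.
End Path.

Lemma arith2 n (b : bool) :
  ((-1) ^+ (uphalf n + b) * sv n == 1) =
  (if b then (n %% 12 \in [:: 3; 5; 6; 8])%N else (n %% 12 \in [:: 0; 2; 9; 11])%N).
Proof.
have E1 : (uphalf n + b = (uphalf (n %% 12) + b) + 2 * (3 * (n %/ 12)))%N by lia.
have E2 : sv n = sv (n %% 12) by rewrite /sv; congr nth; lia.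
rewrite E1 E2 exprD exprM sqrrN !expr1n mulr1.
have : (n %% 12 < 12)%N by rewrite ltn_mod.
move: (n %% 12)%N => r.
by case: b {E1}; do 12 (case: r => [|r] //).
Qed.

End PH.
Import PH.

Module PI.
Set Implicit Arguments. Unset Strict Implicit. Unset Printing Implicit Defensive.
Import GRing.Theory Num.Theory.
Local Open Scope ring_scope.

Lemma final_arith n c dl (Y : int) (isC : bool) :
  (2 <= n)%N -> (c + dl <= (uphalf n).+1)%N ->
  (if isC then exists k, [/\ n = (3 * k + 1)%N, c = k.+1, dl = 0%N & Y = (-1) ^+ k]
   else Y = 0) ->
  ((-1) ^+ (maxn (uphalf n) (c + dl))%N * (sv n - Y) = 1 <->
   [\/ (n %% 12 \in [:: 0; 2; 9; 11])%N /\ (c + dl <= uphalf n)%N,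
       (n %% 12 \in [:: 3; 5; 6; 8])%N /\ (c + dl = (uphalf n).+1)%N
     | (n %% 12 \in [:: 1; 4])%N /\ isC]).
Proof.
move=> Hn Hb; case: isC.
- case=> k [En Ec Edl EY]; subst.
  have Hsv : sv (3 * k + 1) = 0.
    rewrite /sv; have : ((3 * k + 1) %% 6 = 1 \/ (3 * k + 1) %% 6 = 4)%N by lia.
    by case=> ->.
  have Hm : (maxn (uphalf (3 * k + 1)) (k.+1 + 0) = uphalf (3 * k + 1))%N by lia.
  rewrite Hsv Hm sub0r mulrN -exprD -signr_odd.
  have Hodd : odd (uphalf (3 * k + 1) + k) =
              ((3 * k + 1) %% 12 == 1)%N || ((3 * k + 1) %% 12 == 4)%N.
    by apply/idP/idP; lia.
  case Eb: (odd _) in Hodd *.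
    split => _; last by [].
    by constructor 3; split => //; rewrite !inE -Hodd.
  split; first by move/eqP.
  by case=> [[H _]|[H _]|[H _]]; move: H; rewrite !inE; lia.
- move=> EY; rewrite EY subr0.
  case: (leqP (c + dl)%N (uphalf n)) => H.
    have E := arith2 n false; rewrite addn0 in E.
    split.
      by move=> H'; constructor 1; split => //; rewrite -E; apply/eqP.
    case=> [[H1 _]| [_ H2] | [_ F]].
    - by apply/eqP; rewrite E.
    - by exfalso; lia.
    - by [].
  have Ec : (c + dl = uphalf n + true)%N by rewrite addn1; lia.
  rewrite Ec.
  have E := arith2 n true.
  split.
    by move=> H'; constructor 2; split; [rewrite -E; apply/eqP | lia].
  case=> [[_ F]| [H1 _] | [_ F]].
  - by [].
  - by apply/eqP; rewrite E.
  - by [].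
Qed.

Lemma Ip_shift (m : seq bool) :
  Gb +%R m (fun k => (-1) ^+ k.+1) = - Ip m :> int.
Proof. by rewrite /Ip /Gb -sumrN; apply: eq_bigr => b _; rewrite exprS mulN1r. Qed.

Lemma nth_size_last (x : bool) s : nth false (x :: s) (size s) = last x s.
Proof. by elim: s x => //= y s IH x; rewrite IH. Qed.

Lemma main_aux (n : nat) (C : {set 'I_n}) :
  (2 <= n)%N ->
  maximal_independent (@path_rel n) C ->
  let c := #|C| in
  let alpha := uphalf n in
  let delta0 := if [exists i in C, (i : nat) == 0%N] then 0%N else 1%N in
  let deltat := if [exists i in C, (i : nat) == n.-1] then 0%N else 1%N in
  let delta := (delta0 + deltat)%N in
  pseudo_gorenstein_star (suspension (@path_rel n) C) <->
  [\/ (n %% 12 \in [:: 0; 2; 9; 11])%N /\ (c + delta <= alpha)%N,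
      (n %% 12 \in [:: 3; 5; 6; 8])%N /\ (c + delta = alpha.+1)%N
    | (n %% 12 \in [:: 1; 4])%N /\ C = [set i : 'I_n | (i %% 3 == 0)%N]].
Proof.
move=> Hn HC c alpha d0 dt delta.
have HCi : independent (@path_rel n) C by case: HC.
set w := tobs C.
have Hind : ind w by rewrite /w ind_tobs.
have Hdom := dom_tobs HC.
have Hsz : size w = n by rewrite size_tobs.
have EaG : indep_number (suspension (@path_rel n) C) = maxn (uphalf n) (am (map negb w)).+1.
  rewrite susp_alpha.
  have -> : indep_number (@path_rel n) = uphalf n.
    by rewrite /indep_number (path_big_all n maxn (fun k => k)) -am_nseq.
  congr maxn.
  rewrite (path_big maxn (~: C) succn) /Gb tobsC big_max_succ //.
  by rewrite -/w; have := has_allbs (map negb w).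
have Esum : \sum_(A | independent (suspension (@path_rel n) C) A)
     (-1) ^+ (indep_number (suspension (@path_rel n) C) - #|A|) =
   (-1) ^+ (indep_number (suspension (@path_rel n) C)) * (sv n - Ip (map negb w)) :> int.
  rewrite (eq_bigr (fun A : {set option 'I_n} => (-1) ^+ (indep_number (suspension (@path_rel n) C)) * (-1) ^+ #|A|));
    last by move=> A HA; rewrite sign_sub // indep_le.
  rewrite -mulr_sumr; congr (_ * _).
  rewrite (susp_big (@path_rel n) C (+%R : Monoid.com_law (0 : int)) (fun k => (-1) ^+ k)).
  rewrite (path_big_all n (+%R : Monoid.com_law (0 : int)) (fun k => (-1) ^+ k)) -/(Ip _) Ip_nseq.
  by rewrite (path_big (+%R : Monoid.com_law (0 : int)) (~: C) (fun k => (-1) ^+ k.+1)) Ip_shift tobsC.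
rewrite pgs_iff Esum EaG.
have Ec : c = count id w by rewrite /c card_tobs.
have Ed0 : d0 = ~~ nth false w 0 :> nat by rewrite /d0 exists_nth; case: (nth false w 0).
have Edt : dt = ~~ nth false w n.-1 :> nat by rewrite /dt exists_nth; case: (nth false w n.-1).
have E3 : C = [set i : 'I_n | (i %% 3 == 0)%N] <-> w = m3 n.
  split => [HC3|H]; first by rewrite /w HC3 tobs_m3.
  by apply: tobs_inj; rewrite -/w H tobs_m3.
have Hpos : (0 < size w)%N by rewrite Hsz; lia.
case: (shape Hind Hdom Hpos) => [[r Ew Hr]|[r Ew Hr]].
- have Hn' : n = (size r).+1 by rewrite -Hsz Ew.
  have Ham : am (map negb w) = (count id r + ~~ last true r)%N by rewrite Ew /= am_false am_gt.
  have Hcd : (c + delta = (am (map negb w)).+1)%N.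
    rewrite Ham /delta Ec Ed0 Edt Ew Hn' /= nth_size_last; lia.
  have Hb := bound_gt Hr.
  have Hbound : (c + delta <= (uphalf n).+1)%N by rewrite Hcd Ham Hn'; lia.
  set isC := (r == patk (size r %/ 3)).
  have EY : Ip (map negb w) = if isC then (-1) ^+ (size r %/ 3) else 0.
    by rewrite Ew /= Ip_false Ip_gt.
  have Hcase : if isC then exists k, [/\ n = (3 * k + 1)%N, c = k.+1, delta = 0%N &
                 Ip (map negb w) = (-1) ^+ k] else Ip (map negb w) = 0.
    rewrite EY; case E: isC => //.
    move/eqP: E => Er; exists (size r %/ 3)%N; split => //.
    - have Hsr : size r = (3 * (size r %/ 3))%N by rewrite {1}Er size_patk.
      lia.
    - by rewrite Ec Ew /= {1}Er count_patk.
    - by rewrite /delta Ed0 Edt Ew Hn' /= nth_size_last {1}Er last_patk.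
  rewrite -Hcd; apply: (iff_trans (final_arith Hn Hbound Hcase)).
  split => [] [H|H|[H1 H2]]; [by constructor 1 | by constructor 2 | | by constructor 1 | by constructor 2 | ].
  + constructor 3; split => //; apply/E3.
    move/eqP: H2 => Er.
    have Hsr : size r = (3 * (size r %/ 3))%N by rewrite {1}Er size_patk.
    rewrite Ew Hn' Hsr (_ : (3 * (size r %/ 3)).+1 = 3 * (size r %/ 3) + 1)%N; last by lia.
    by rewrite m3_patk -Er.
  + constructor 3; split => //; move/E3: H2; rewrite Ew.
    have Hk : size r = (3 * (size r %/ 3))%N by move: H1; rewrite !inE Hn'; lia.
    rewrite Hn' Hk (_ : (3 * (size r %/ 3)).+1 = 3 * (size r %/ 3) + 1)%N; last by lia.
    rewrite m3_patk; case=> Er; rewrite /isC.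
    by apply/eqP.
- have Hn' : n = (size r).+2 by rewrite -Hsz Ew.
  have Hmw : map negb w = [:: true] ++ false :: map negb r by rewrite Ew.
  have Ham : am (map negb w) = (count id r + ~~ last true r).+1.
    by rewrite Hmw am_cat am_gt // am_true !am_nil.
  have Hcd : (c + delta = (am (map negb w)).+1)%N.
    rewrite Ham /delta Ec Ed0 Edt Ew Hn' /= nth_size_last; lia.
  have Hb := bound_gt Hr.
  have Hbound : (c + delta <= (uphalf n).+1)%N by rewrite Hcd Ham Hn'; lia.
  have Hcase : if false then exists k, [/\ n = (3 * k + 1)%N, c = k.+1, delta = 0%N &
                 Ip (map negb w) = (-1) ^+ k] else Ip (map negb w) = 0.
    by rewrite /= Hmw Ip_cat Ip_true !Ip_nil subrr mul0r.
  rewrite -Hcd; apply: (iff_trans (@final_arith n c delta (Ip (map negb w)) false Hn Hbound Hcase)).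
  split => [] [H|H|[H1 H2]]; [by constructor 1 | by constructor 2 | by [] | by constructor 1 | by constructor 2 | ].
  by move/E3: H2; rewrite Ew Hn' /m3 /mkseq /= => [[]].
Qed.

End PI.
Import PI.

Theorem corollary7p4 (n : nat) (C : {set 'I_n}) :
  (2 <= n)%N ->
  maximal_independent (@path_rel n) C ->
  let c := #|C| in
  let alpha := uphalf n in
  let delta0 := if [exists i in C, (i : nat) == 0%N] then 0%N else 1%N in
  let deltat := if [exists i in C, (i : nat) == n.-1] then 0%N else 1%N in
  let delta := (delta0 + deltat)%N in
  pseudo_gorenstein_star (suspension (@path_rel n) C) <->
  [\/ (n %% 12 \in [:: 0; 2; 9; 11])%N /\ (c + delta <= alpha)%N,
      (n %% 12 \in [:: 3; 5; 6; 8])%N /\ (c + delta = alpha.+1)%N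
    | (n %% 12 \in [:: 1; 4])%N /\ C = [set i : 'I_n | (i %% 3 == 0)%N]].
Proof. exact: PI.main_aux. Qed.
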